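(* Let $n>1$, $t,p\ge 1$ be integers, let $G$ be a regular graph of order $m$, and suppose $tpm>1$. If $n\equiv 0\pmod 2$, or $ntpm\equiv 1\pmod 2$, or $tpG$ is distance magic, then $tH_{n,p}\otimes G$ is distance magic.
   Context: A graph $G$ on $v$ vertices is distance magic if there is a bijection $f:V(G)\to\{1,\ldots,v\}$ and a constant $k$ such that for every vertex $x$, $\sum_{y\in N(x)}f(y)=k$, where $N(x)$ is the set of neighbours of $x$. $H_{n,p}$ denotes the complete multipartite graph with $p$ partite sets each of size $n$; $cH$ denotes the disjoint union of $c$ copies of $H$. The Kronecker (tensor) product $G\otimes H$ has vertex set $V(G)\times V(H)$, with $(g,h)\sim(g',h')$ iff $gg'\in E(G)$ and $hh'\in E(H)$. *)

(* Defs.v *)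
From mathcomp Require Import all_boot.
Set Implicit Arguments. Unset Strict Implicit. Unset Printing Implicit Defensive.

Definition simple_graph (T : finType) (e : rel T) : Prop :=
  symmetric e /\ irreflexive e.

Definition nbhd (T : finType) (e : rel T) (x : T) : {set T} := [set y | e x y].

Definition regular (T : finType) (e : rel T) : Prop :=
  exists r : nat, forall x : T, #|nbhd e x| = r.

(* Distance magic: a bijection f : V -> {1,...,|V|} and a constant k with
   sum_{y in N(x)} f y = k for every vertex x.  f is given as an injective
   map into nat with values in [1, |V|], hence a bijection onto {1..|V|}. *)
Definition distance_magic (T : finType) (e : rel T) : Prop :=
  exists f : T -> nat,
    injective f /\ (forall x, 0 < f x <= #|T|) /\
    exists k : nat, forall x : T, \sum_(y in nbhd e x) f y = k.

(* H_{n,p}: complete multipartite graph with p parts of size n.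
   Vertex (i, j) : part i, index j; adjacent iff in different parts. *)
Definition Hnp_rel (n p : nat) : rel ('I_p * 'I_n) :=
  fun u v => u.1 != v.1.

Definition copies_rel (c : nat) (T : finType) (e : rel T) : rel ('I_c * T) :=
  fun u v => (u.1 == v.1) && e u.2 v.2.

Definition kron_rel (T1 T2 : finType) (e1 : rel T1) (e2 : rel T2)
  : rel (T1 * T2) :=
  fun u v => e1 u.1 v.1 && e2 u.2 v.2.

Arguments Hnp_rel n p : clear implicits.
Arguments copies_rel c {T} e.

(* Main.v *)
Require Import Defs.
From mathcomp Require Import all_boot zify.
Set Implicit Arguments. Unset Strict Implicit. Unset Printing Implicit Defensive.

Definition pairfun (k j a : nat) := if odd j then k - 1 - a else a.

Lemma pairfun_sum k a q : a < k ->
  \sum_(0 <= j < q.*2) pairfun k j a = q * (k - 1).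
Proof.
move=> ak; elim: q => [|q IH]; first by rewrite big_geq.
rewrite doubleS !big_nat_recr //= IH /pairfun odd_double /=.
rewrite odd_double /=. lia.
Qed.

Definition s1 h a := if a <= h then a + h else a - h - 1.
Definition s2 h a := 3 * h - (a + s1 h a).

Definition sig3 q h j a :=
  if j < q.*2 then pairfun (h.*2.+1) j a
  else if j == q.*2 then a else if j == q.*2.+1 then s1 h a else s2 h a.

Lemma sigma_exists n k : 0 < k -> 1 < n -> (~~ odd n \/ odd k) ->
  exists s : nat -> nat -> nat,
    [/\ (forall j a, j < n -> a < k -> s j a < k),
        (forall j a a', j < n -> a < k -> a' < k -> s j a = s j a' -> a = a') &
        exists C, forall a, a < k -> \sum_(j < n) s j a = C].
Proof.
move=> k0 n1 H; case: (boolP (odd n)) => [nodd|ev].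
  have ok : odd k by case: H => //; rewrite nodd.
  have kE : k = (k./2).*2.+1 by rewrite -{1}(odd_double_half k) ok.
  have nE : n = ((n./2).-1).*2.+3.
    rewrite -{1}(odd_double_half n) nodd.
    have : 0 < n./2 by move: n1 nodd; clear; case: n => [|[|[|n]]].
    by case: (n./2).
  set h := k./2 in kE; set q := (n./2).-1 in nE.
  exists (sig3 q h); split.
  - move=> j a jn ak; rewrite /sig3 /pairfun /s2 /s1.
    case: ifP => _; first by case: odd; lia.
    case: ifP => _; first lia.
    case: ifP => ?; case: ifP => ?; lia.
  - move=> j a a' jn ak a'k; rewrite /sig3 /pairfun /s2 /s1.
    case: ifP => _; first by case: odd; lia.
    case: ifP => _; first lia.
    case: ifP => ?; case: ifP => ?; case: ifP => ?; lia.
  exists (q * (k - 1) + 3 * h) => a ak.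
  rewrite -(big_mkord xpredT (fun j => sig3 q h j a)) nE !big_nat_recr //=.
  have -> : \sum_(0 <= i < q.*2) sig3 q h i a = \sum_(0 <= i < q.*2) pairfun k i a.
    by apply: eq_big_nat => j /andP [_ jq]; rewrite /sig3 -kE jq.
  rewrite pairfun_sum // /sig3 /s2 /s1.
  by repeat (case: ifP => ?); lia.
exists (pairfun k); split.
- by move=> j a _ ak; rewrite /pairfun; case: odd; lia.
- by move=> j a a' _ ak a'k; rewrite /pairfun; case: odd; lia.
exists (n./2 * (k - 1)) => a ak.
rewrite -(big_mkord xpredT (fun j => pairfun k j a)).
have -> : n = (n./2).*2 by rewrite -{1}(odd_double_half n) (negbTE ev).
by rewrite pairfun_sum // doubleK.
Qed.

Lemma key n t p (T : finType) (e : rel T) (F : 'I_t -> 'I_p -> 'I_n -> T -> nat) :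
  (forall c i j x c' i' j' x', F c i j x = F c' i' j' x' -> [/\ c = c', i = i', j = j' & x = x']) ->
  (forall c i j x, 0 < F c i j x <= t * p * n * #|T|) ->
  (exists K, forall c i x, \sum_(y in nbhd e x) \sum_(j < n) F c i j y = K) ->
  distance_magic (kron_rel (copies_rel t (Hnp_rel n p)) e).
Proof.
move=> Finj Frange [K HK].
exists (fun v => F v.1.1 v.1.2.1 v.1.2.2 v.2); split; [|split].
- move=> [[c [i j]] x] [[c' [i' j']] x'] /= /Finj [-> -> -> ->] //.
- move=> [[c [i j]] x] /=; rewrite !card_prod !card_ord mulnA; exact: Frange.
exists ((p.-1) * K) => [[[c [i j]] x]].
set G := fun v : ('I_t * ('I_p * 'I_n)) * T =>
  if kron_rel (copies_rel t (Hnp_rel n p)) e (c, (i, j), x) v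
  then F v.1.1 v.1.2.1 v.1.2.2 v.2 else 0.
rewrite /nbhd (big_mkcond (fun v => v \in _)).
transitivity (\sum_v G v); first by apply: eq_bigr => v _; rewrite inE.
rewrite -(pair_bigA _ (fun a y => G (a, y))).
rewrite -(pair_bigA _ (fun c' b => \sum_y G ((c', b), y))).
rewrite (bigD1 c) //= [X in _ + X]big1 ?addn0; last first.
  move=> c' cc'; apply: big1 => b _; apply: big1 => y _.
  by rewrite /G /kron_rel /copies_rel /= eq_sym (negbTE cc').
rewrite -(pair_bigA _ (fun i' j' => \sum_y G ((c, (i', j')), y))).
rewrite (bigD1 i) //= [X in X + _]big1 ?add0n; last first.
  move=> j' _; apply: big1 => y _; rewrite /G /kron_rel /copies_rel /Hnp_rel /=. by rewrite !eqxx.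
rewrite (_ : p.-1 * K = \sum_(i' < p | i' != i) K); last first.
  by rewrite (eq_bigl (mem (predC1 i))) // sum_nat_const cardC1 card_ord.
apply: eq_big => [//|i' ii'].
rewrite -(HK c i' x) exchange_big /= (bigID (fun y => e x y)) /= [X in _ + X]big1 ?addn0; last first.
  by move=> y /negbTE exy; apply: big1 => j' _; rewrite /G /kron_rel /= exy andbF.
apply: eq_big => [y|y exy]; first by rewrite inE.
apply: eq_bigr => j' _.
by rewrite /G /kron_rel /copies_rel /Hnp_rel /= eqxx eq_sym ii' exy.
Qed.

Lemma divmod_inj k j j' s s' : s < k -> s' < k -> j * k + s = j' * k + s' -> j = j' /\ s = s'.
Proof.
move=> sk s'k E.
have k0 : 0 < k by case: k sk {s'k E}.
have Ej : j = j'.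
  have e1 : (j * k + s) %/ k = j by rewrite divnMDl // divn_small ?addn0.
  have e2 : (j' * k + s') %/ k = j' by rewrite divnMDl // divn_small ?addn0.
  by rewrite -e1 E e2.
by split=> //; move: E; rewrite Ej => /addnI.
Qed.

Lemma test (j j' M g g' : nat) : 0 < g -> 0 < g' -> j * M + g = j' * M + g' -> j * M + (g - 1) = j' * M + (g' - 1).
Proof. lia. Qed.

Lemma copies_sum c (T : finType) (e : rel T) (g : 'I_c * T -> nat) s x :
  \sum_(v in nbhd (copies_rel c e) (s, x)) g v = \sum_(y in nbhd e x) g (s, y).
Proof.
set G := fun v : 'I_c * T => if copies_rel c e (s, x) v then g (v.1, v.2) else 0.
rewrite /nbhd big_mkcond.
transitivity (\sum_v G v); first by apply: eq_bigr => -[a b] _; rewrite inE.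
rewrite -(pair_bigA _ (fun a y => G (a, y))).
rewrite (bigD1 s) //= [X in _ + X]big1 ?addn0; last first.
  move=> s' ss'; apply: big1 => y _; rewrite /G /copies_rel /= eq_sym.
  by rewrite (negbTE ss').
rewrite [RHS]big_mkcond; apply: eq_bigr => y _.
by rewrite /G /copies_rel /= eqxx inE.
Qed.

Lemma idx_lt t p (c : 'I_t) (i : 'I_p) : c * p + i < t * p.
Proof. have := ltn_ord c; have := ltn_ord i; nia. Qed.

Definition idx t p (c : 'I_t) (i : 'I_p) : 'I_(t * p) := Ordinal (idx_lt c i).

Theorem corollary2 (n t p : nat) (T : finType) (e : rel T) :
  1 < n -> 1 <= t -> 1 <= p ->
  simple_graph e -> regular e ->
  1 < t * p * #|T| ->
  (~~ odd n \/ odd (n * t * p * #|T|) \/ distance_magic (copies_rel (t * p) e)) ->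
  distance_magic (kron_rel (copies_rel t (Hnp_rel n p)) e).
Proof.
move=> n1 t1 p1 _ [r Hr] k1 H.
set k := t * p * #|T|.
have cardX : #|{: ('I_t * 'I_p) * T}| = k by rewrite !card_prod !card_ord.
have [H'|[g [ginj [grange [k' Hk']]]]] :
    (~~ odd n \/ odd k) \/ distance_magic (copies_rel (t * p) e).
  case: H => [H|[H|H]]; [by left; left | left; right | by right].
  by move: H; rewrite /k -!mulnA oddM => /andP[].
- have k0 : 0 < k by lia.
  have [s [srange sinj [C HC]]] := sigma_exists k0 n1 H'.
  pose a (c : 'I_t) (i : 'I_p) (x : T) : nat := enum_rank ((c, i), x).
  have alt c i x : a c i x < k by rewrite /a -cardX ltn_ord.
  apply: (@key n t p T e (fun c i j x => j * k + s j (a c i x) + 1)).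
  + move=> c i j x c' i' j' x' /addIn /divmod_inj [].
    * exact: srange.
    * exact: srange.
    move=> /val_inj jj'; subst j'.
    move=> /sinj => /(_ (ltn_ord j) (alt _ _ _) (alt _ _ _)) /val_inj /enum_rank_inj [-> -> ->].
    by [].
  + move=> c i j x; have := srange j (a c i x) (ltn_ord j) (alt c i x).
    have := ltn_ord j; rewrite -/k; nia.
  exists (r * (\sum_(j < n) (j * k + 1) + C)) => c i x.
  rewrite -(Hr x) -sum_nat_const; apply: eq_bigr => y _.
  rewrite -(HC (a c i y)) ?alt // -big_split /=.
  by apply: eq_bigr => j _; lia.
have cardY : #|{: 'I_(t * p) * T}| = k by rewrite card_prod card_ord.
have grng v : 0 < g v <= k by rewrite -cardY; exact: grange.
apply: (@key n t p T e (fun c i j x => j * k + g (idx c i, x))).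
- move=> c i j x c' i' j' x' E.
  have := grng (idx c i, x); have := grng (idx c' i', x') => g1 g2.
  have E' : j * k + (g (idx c i, x) - 1) = j' * k + (g (idx c' i', x') - 1) by lia.
  have h1 : g (idx c i, x) - 1 < k by lia.
  have h2 : g (idx c' i', x') - 1 < k by lia.
  have [/val_inj jj' _] := divmod_inj h1 h2 E'.
  subst j'.
  have gE' : g (idx c i, x) = g (idx c' i', x') by lia.
  move/ginj: gE' => [] ci ->.
  by have [/val_inj -> /val_inj ->] := divmod_inj (ltn_ord i) (ltn_ord i') ci.
- move=> c i j x; have := grng (idx c i, x); have := ltn_ord j; nia.
exists (\sum_(j < n) (r * (j * k) + k')) => c i x.
rewrite exchange_big /=; apply: eq_bigr => j _.
rewrite big_split /= sum_nat_const Hr -(Hk' (idx c i, x)) copies_sum.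
by [].
Qed.
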